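(* Assume Assumptions B and C hold, let $w^{(t)}$ be generated by Algorithm 2 and $\eta^{(t)}=D\sqrt{\varepsilon}$ for some $D>0$. Then for all $i\in[n]$ and $0\le t<T$, $$\|\epsilon_i^{(t)}\|^2\le c\big(2+(V+\varepsilon^2+2)GD^2\big)^2\varepsilon^2.$$
   Context: Let $n,c,d$ be positive integers and $[n]=\{1,\dots,n\}$. For each $i\in[n]$ let $h(\cdot;i):\mathbb{R}^d\to\mathbb{R}^c$ (components $h_j(\cdot;i)$) and $\phi_i:\mathbb{R}^c\to\mathbb{R}$ differentiable. Norms: Euclidean for vectors, operator for matrices. Assumption B: each $h(\cdot;i)$ is twice continuously differentiable and there is $G>0$ with $\|\nabla_w^2 h_j(w;i)\|\le G$ for all $w,i,j$. Iteration setup: given $\varepsilon>0$, $\eta^{(t)}>0$, $\alpha_i^{(t)}>0$ and iterates $w^{(t)}$, let $H_i^{(t)}$ be the Jacobian of $h(\cdot;i)$ at $w^{(t)}$, $\Phi^{(t)}(v)=\frac{1}{2n}\sum_{i=1}^n\|\eta^{(t)}H_i^{(t)}v-\alpha_i^{(t)}\nabla\phi_i(h(w^{(t)};i))\|^2$, $\Psi^{(t)}(v)=\Phi^{(t)}(v)+\frac{\varepsilon^2}{2}\|v\|^2$, $v_{*\mathrm{reg}}^{(t)}$ its unique minimizer. Algorithm 2: $w^{(t+1)}=w^{(t)}-\eta^{(t)}v^{(t)}$ where $\|v^{(t)}-v_{*\mathrm{reg}}^{(t)}\|\le\varepsilon$, $t=0,\dots,T-1$. Assumption C (constant $V>0$):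 for each $0\le t<T$ there is $\hat v^{(t)}$ with $\|\hat v^{(t)}\|^2\le V$ and $\Phi^{(t)}(\hat v^{(t)})\le\varepsilon^2$. Error vector: $\epsilon_i^{(t)}=h(w^{(t+1)};i)-h(w^{(t)};i)+\eta^{(t)}H_i^{(t)}v^{(t)}\in\mathbb{R}^c$. *)

(* Defs.v *)
From HB Require Import structures.
From mathcomp Require Import all_boot all_order all_algebra.
From mathcomp Require Import all_classical all_reals all_analysis.
Set Implicit Arguments. Unset Strict Implicit. Unset Printing Implicit Defensive.
Import Order.TTheory GRing.Theory Num.Theory.
Import numFieldNormedType.Exports.
Local Open Scope classical_set_scope.
Local Open Scope ring_scope.

Definition enorm (R : realType) (k : nat) (v : 'rV[R]_k) : R :=
  Num.sqrt (\sum_(l < k) v 0 l ^+ 2).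

Definition opnorm (R : realType) (k : nat) (A : 'M[R]_k) : R :=
  sup [set enorm (u *m A) | u in [set u : 'rV[R]_k | enorm u <= 1]].

Definition grad (R : realType) (k : nat) (g : 'rV[R]_k -> R) (w : 'rV[R]_k)
  : 'rV[R]_k := \row_(l < k) ('d g w (delta_mx 0 l)).

Definition hessian (R : realType) (k : nat) (g : 'rV[R]_k -> R) (w : 'rV[R]_k)
  : 'M[R]_k := lin1_mx ('d (grad g) w).

Definition C2 (R : realType) (k : nat) (g : 'rV[R]_k -> R) : Prop :=
  (forall w, differentiable g w) /\
  (forall w, differentiable (grad g) w) /\
  continuous (hessian g).

Definition comp_fun (R : realType) (k m : nat) (f : 'rV[R]_k -> 'rV[R]_m)
  (j : 'I_m) : 'rV[R]_k -> R := fun w => f w 0 j.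

Definition jvp (R : realType) (k m : nat) (f : 'rV[R]_k -> 'rV[R]_m)
  (w v : 'rV[R]_k) : 'rV[R]_m := 'd f w v.

Definition Phi (R : realType) (n c d : nat) (h : 'I_n -> 'rV[R]_d -> 'rV[R]_c)
  (phi : 'I_n -> 'rV[R]_c -> R) (eta : nat -> R) (alpha : 'I_n -> nat -> R)
  (w : nat -> 'rV[R]_d) (t : nat) (v : 'rV[R]_d) : R :=
  (2 * n%:R)^-1 * \sum_(i < n)
    enorm (eta t *: jvp (h i) (w t) v - alpha i t *: grad (phi i) (h i (w t))) ^+ 2.

Definition Psi (R : realType) (n c d : nat) (h : 'I_n -> 'rV[R]_d -> 'rV[R]_c)
  (phi : 'I_n -> 'rV[R]_c -> R) (eta : nat -> R) (alpha : 'I_n -> nat -> R)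
  (w : nat -> 'rV[R]_d) (eps : R) (t : nat) (v : 'rV[R]_d) : R :=
  Phi h phi eta alpha w t v + eps ^+ 2 / 2 * enorm v ^+ 2.

Definition err_vec (R : realType) (n c d : nat) (h : 'I_n -> 'rV[R]_d -> 'rV[R]_c)
  (eta : nat -> R) (w v : nat -> 'rV[R]_d) (i : 'I_n) (t : nat) : 'rV[R]_c :=
  h i (w t.+1) - h i (w t) + eta t *: jvp (h i) (w t) (v t).

(* Main.v *)
Require Import Defs.
From HB Require Import structures.
From mathcomp Require Import all_boot all_order all_algebra.
From mathcomp Require Import all_classical all_reals all_analysis.
From mathcomp Require Import ring lra.
Import Order.TTheory GRing.Theory Num.Theory.
Import numFieldNormedType.Exports.
Local Open Scope classical_set_scope.
Local Open Scope ring_scope.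

Set Implicit Arguments. Unset Strict Implicit.
Section Aux.
Variable R : realType.

Definition ns {k : nat} (v : 'rV[R]_k) : R := \sum_(l < k) v 0 l ^+ 2.

Lemma ns_ge0 k (v : 'rV[R]_k) : 0 <= ns v.
Proof. by apply: sumr_ge0 => l _; exact: sqr_ge0. Qed.

Lemma enorm2 k (v : 'rV[R]_k) : enorm v ^+ 2 = ns v.
Proof. by rewrite /enorm sqr_sqrtr //; exact: ns_ge0. Qed.

Lemma enorm_ge0 k (v : 'rV[R]_k) : 0 <= enorm v.
Proof. exact: sqrtr_ge0. Qed.

Lemma nsZ k (a : R) (v : 'rV[R]_k) : ns (a *: v) = a ^+ 2 * ns v.
Proof. rewrite /ns mulr_sumr; apply: eq_bigr => l _; rewrite mxE; ring. Qed.

Lemma ns_addle k (a b : 'rV[R]_k) : ns (a + b) <= 2 * ns a + 2 * ns b.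
Proof.
rewrite /ns !mulr_sumr -big_split /=; apply: ler_sum => l _; rewrite mxE.
have := sqr_ge0 (a 0 l - b 0 l); nra.
Qed.

Lemma coord_le k (v : 'rV[R]_k) l : v 0 l ^+ 2 <= ns v.
Proof.
rewrite /ns (bigD1 l) //= lerDl; apply: sumr_ge0 => i _; exact: sqr_ge0.
Qed.

Lemma enorm_le_sumabs k (v : 'rV[R]_k) : enorm v <= \sum_(l < k) `|v 0 l|.
Proof.
have S0 : 0 <= \sum_(l < k) `|v 0 l| by apply: sumr_ge0 => *.
rewrite /enorm -(ger0_norm S0) -sqrtr_sqr ler_sqrt; last exact: sqr_ge0.
rewrite /ns expr2 mulr_sumr ler_sum // => l _.
have h1 : `|v 0 l| <= \sum_(l < k) `|v 0 l|.
  rewrite (bigD1 l) //= lerDl; apply: sumr_ge0 => *; exact: normr_ge0.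
rewrite -real_normK ?num_real // expr2; apply: ler_wpM2r => //.
Qed.

Lemma enormZ k (a : R) (v : 'rV[R]_k) : enorm (a *: v) = `|a| * enorm v.
Proof. by rewrite /enorm -/(ns _) nsZ sqrtrM ?sqr_ge0 // sqrtr_sqr. Qed.

Lemma ns_eq0 k (v : 'rV[R]_k) : ns v = 0 -> v = 0.
Proof.
move=> h0; apply/matrixP => i l; rewrite mxE ord1.
have := coord_le v l; rewrite h0 => hl.
by apply/eqP; rewrite -sqrf_eq0 eq_le hl sqr_ge0.
Qed.

Lemma opnorm_ub k (A : 'M[R]_k) (u : 'rV[R]_k) :
  enorm (u *m A) <= opnorm A * enorm u.
Proof.
set S := [set enorm (u *m A) | u in [set u : 'rV[R]_k | enorm u <= 1]].
have hub : has_ubound S.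
  exists (\sum_(l < k) \sum_(i < k) `|A i l|) => x [u' /= hu' <-].
  apply: (le_trans (enorm_le_sumabs _)); apply: ler_sum => l _.
  rewrite mxE; apply: (le_trans (ler_norm_sum _ _ _)); apply: ler_sum => i _.
  rewrite normrM; rewrite -[leRHS]mul1r; apply: ler_wpM2r; first exact: normr_ge0.
  have h1 : u' 0 i ^+ 2 <= 1.
    apply: (le_trans (coord_le _ _)); rewrite -enorm2.
    have := enorm_ge0 u'; nra.
  rewrite -real_normK ?num_real // in h1.
  have := normr_ge0 (u' 0 i); nra.
have [e0|epos] := eqVneq (ns u) 0.
  have u0 := ns_eq0 e0; subst u.
  by rewrite mul0mx /enorm /ns big1 ?sqrtr0 ?mulr0 // => l _; rewrite mxE expr0n.
have ep : 0 < enorm u by rewrite /enorm sqrtr_gt0 lt_def epos ns_ge0.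
have : S (enorm (((enorm u)^-1 *: u) *m A)).
  exists ((enorm u)^-1 *: u) => //=.
  by rewrite enormZ ger0_norm ?invr_ge0 ?enorm_ge0 // mulVf ?gt_eqF.
move/(ub_le_sup hub); rewrite -scalemxAl enormZ ger0_norm ?invr_ge0 ?enorm_ge0 //.
by rewrite mulrC ler_pdivrMr.
Qed.

Lemma line_derive (V : normedModType R) (f : V -> R) (x q : V) (s : R) :
  derivable f (s *: q + x) q ->
  is_derive s 1 (fun r : R => f (r *: q + x)) ('D_q f (s *: q + x)).
Proof.
move=> df.
have E : (fun h : R => h^-1 *: (((fun r : R => f (r *: q + x)) \o shift s) (h *: 1)
            - f (s *: q + x))) =
         (fun h : R => h^-1 *: ((f \o shift (s *: q + x)) (h *: q) - f (s *: q + x))).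
  apply: funext => h /=; congr (_ *: (f _ - _)).
  by rewrite [h *: 1]mulr1 scalerDl addrA.
split; first by rewrite /derivable E.
by rewrite /derive E.
Qed.

Lemma K_derive k (g : 'rV[R]_k -> R) (q z : 'rV[R]_k) :
  (forall w, differentiable g w) -> (forall w, differentiable (grad g) w) ->
  derivable (fun y => 'D_q g y) z q /\
  'D_q (fun y => 'D_q g y) z = \sum_(l < k) q 0 l * (q *m hessian g z) 0 l.
Proof.
move=> dg dG.
have KE : (fun y => 'D_q g y) = \sum_(l < k) (q 0 l \*: (fun y => grad g y 0 l)).
  apply: funext => y; rewrite fct_sumE (deriveE _ (dg y)).
  rewrite {1}(row_sum_delta q) linear_sum; apply: eq_bigr => l _.
  by rewrite linearZ /= /grad mxE.
have dc : forall l, derivable (fun y => grad g y 0 l) z q.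
  by move=> l; move: (diff_derivable (v:=q) (dG z)) => /derivable_mxP; apply.
have dcZ : forall l, derivable (q 0 l \*: (fun y => grad g y 0 l)) z q.
  by move=> l; apply: derivableZ.
rewrite KE; split; first exact: derivable_sum.
rewrite derive_sum //; apply: eq_bigr => l _.
rewrite deriveZ //; congr (_ * _).
have := congr1 (fun M : 'M[R]_(1,k) => M 0 l) (derive_mx (diff_derivable (v:=q) (dG z))).
rewrite mxE /= => <-; rewrite (deriveE _ (dG z)).
by rewrite /hessian mul_rV_lin1.
Qed.

Lemma quad_bound k (A : 'M[R]_k) (q : 'rV[R]_k) (G : R) :
  0 < G -> opnorm A <= G ->
  `|\sum_(l < k) q 0 l * (q *m A) 0 l| <= G * ns q.
Proof.
move=> G0 hA; set b := q *m A.
have nb : ns b <= G ^+ 2 * ns q.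
  have h1 : enorm b <= G * enorm q.
    apply: (le_trans (opnorm_ub _ _)); apply: ler_wpM2r => //; exact: enorm_ge0.
  rewrite -!enorm2; have := enorm_ge0 b; have := enorm_ge0 q.
  nra.
have step : forall l, `|q 0 l * b 0 l| <= (G * q 0 l ^+ 2 + G^-1 * b 0 l ^+ 2) / 2.
  move=> l; rewrite normrM.
  have hq := normr_ge0 (q 0 l); have hb := normr_ge0 (b 0 l).
  rewrite -(real_normK (num_real (q 0 l))) -(real_normK (num_real (b 0 l))).
  set x := `|q 0 l|; set y := `|b 0 l|.
  have Gi : G^-1 * G = 1 by rewrite mulVf ?gt_eqF.
  have Gip : 0 < G^-1 by rewrite invr_gt0.
  have := sqr_ge0 (G * x - y).
  move=> hsq.
  rewrite ler_pdivlMr //.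
  have : G^-1 * (G * x - y) ^+ 2 >= 0 by apply: mulr_ge0; [exact: ltW|].
  have e : G^-1 * (G * x - y) ^+ 2 = G * x ^+ 2 - 2 * x * y + G^-1 * y ^+ 2.
    by field; rewrite gt_eqF.
  rewrite e; lra.
apply: (le_trans (ler_norm_sum _ _ _)).
apply: (le_trans (ler_sum _ (fun l _ => step l))).
rewrite -mulr_suml big_split /= -!mulr_sumr -/(ns q) -/(ns b).
have Gip : 0 < G^-1 by rewrite invr_gt0.
have : G^-1 * ns b <= G^-1 * (G ^+ 2 * ns q) by apply: ler_wpM2l => //; exact: ltW.
rewrite mulrA expr2 mulrA mulVf ?gt_eqF // mul1r => hh.
rewrite ler_pdivrMr //; lra.
Qed.

Lemma phi_derive (F F' : R -> R) (a m r : R) : (forall r : R, is_derive r (1:R) F (F' r)) ->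
  is_derive r (1:R) (F - (fun r : R => r * a) - (fun r : R => m / 2 * r ^+ 2)) (F' r - a - m * r).
Proof.
move=> dF; apply: is_derive_eq.
by rewrite scaler0 add0r; rewrite /GRing.scale /=; field.
Qed.

Lemma taylor2 k (g : 'rV[R]_k -> R) (x q : 'rV[R]_k) (M : R) :
  (forall w, differentiable g w) -> (forall w, differentiable (grad g) w) ->
  (forall z, `|\sum_(l < k) q 0 l * (q *m hessian g z) 0 l| <= M) ->
  `|g (q + x) - g x - 'd g x q| <= M / 2.
Proof.
move=> dg dG hM.
pose F := fun r : R => g (r *: q + x).
pose F' := fun r : R => 'D_q g (r *: q + x).
pose F'' := fun r : R => \sum_(l < k) q 0 l * (q *m hessian g (r *: q + x)) 0 l.
have dF : forall r : R, is_derive r (1:R) F (F' r).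
  move=> r; exact: line_derive (diff_derivable (dg _)).
have dF' : forall r : R, is_derive r (1:R) F' (F'' r).
  move=> r; have [d1 d2] := K_derive q (r *: q + x) dg dG.
  rewrite /F'' -d2; exact: (line_derive (f := fun y => 'D_q g y)).
have cF' : forall a b : R, {within `[a, b], continuous F'}.
  move=> a b; apply: derivable_within_continuous => y _; exact: ex_derive.
have step1 : forall s : R, 0 <= s -> `|F' s - F' 0| <= M * s.
  move=> s s0; have [c _ ->] := MVT_segment s0 (fun y _ => dF' y) (cF' 0 s).
  rewrite subr0 normrM (ger0_norm s0); apply: ler_wpM2r => //; exact: hM.
have M0 : 0 <= M by apply: le_trans (hM x); exact: normr_ge0.
have key : forall m : R, exists2 c : R, 0 <= c & 
    (F 1 - 1 * F' 0 - m / 2 * 1 ^+ 2) - (F 0 - 0 * F' 0 - m / 2 * 0 ^+ 2)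
    = F' c - F' 0 - m * c.
  move=> m.
  have dphi := fun r => phi_derive (F' 0) m r dF.
  have cphi : {within `[0, 1], continuous
      (F - (fun r : R => r * F' 0) - (fun r : R => m / 2 * r ^+ 2))}.
    apply: derivable_within_continuous => y _; exact: ex_derive.
  have [c /andP[c0 _] hc] := MVT_segment ler01 (fun y _ => dphi y) cphi.
  exists c => //; rewrite subr0 mulr1 in hc; rewrite -hc; reflexivity.
have E1 : F 1 = g (q + x) by rewrite /F scale1r.
have E0 : F 0 = g x by rewrite /F scale0r add0r.
have E' : F' 0 = 'd g x q by rewrite /F' scale0r add0r deriveE.
have [c1 c10 h1] := key M; have [c2 c20 h2] := key (- M).
have s1 := step1 c1 c10; have s2 := step1 c2 c20.
rewrite ler_norml in s1; rewrite ler_norml in s2.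
case/andP: s1 => s1a s1b; case/andP: s2 => s2a s2b.
rewrite -E1 -E0 -E' ler_norml; apply/andP; split; nra.
Qed.

Lemma comp_diff c k (f : 'rV[R]_k -> 'rV[R]_c) (x : 'rV[R]_k) :
  (forall j w, differentiable (comp_fun f j) w) ->
  differentiable f x /\ forall u j, (jvp f x u) 0 j = 'd (comp_fun f j) x u.
Proof.
move=> dc.
have df : differentiable f x.
  have fE : f = \sum_(j < c) (fun w => comp_fun f j w *: ('e_j : 'rV[R]_c)).
    by apply: funext => w; rewrite fct_sumE {1}(row_sum_delta (f w)).
  rewrite fE; apply: differentiable_sum => j; exact: differentiableZl.
split => // u j.
rewrite /jvp -(deriveE _ df).
have := congr1 (fun M : 'M[R]_(1,c) => M 0 j) (derive_mx (diff_derivable (v:=u) df)).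
rewrite mxE /= => ->.
exact: (deriveE _ (dc j x)).
Qed.
End Aux.

Theorem mainTheorem15 (R : realType) (n c d : nat)
  (h : 'I_n -> 'rV[R]_d -> 'rV[R]_c) (phi : 'I_n -> 'rV[R]_c -> R)
  (G V D eps : R) (T : nat)
  (eta : nat -> R) (alpha : 'I_n -> nat -> R)
  (w v vreg : nat -> 'rV[R]_d) :
  (0 < n)%N -> (0 < c)%N -> (0 < d)%N ->
  (forall i z, differentiable (phi i) z) ->
  (* Assumption B *)
  0 < G ->
  (forall i j, C2 (comp_fun (h i) j)) ->
  (forall i j x, opnorm (hessian (comp_fun (h i) j) x) <= G) ->
  (* iteration setup *)
  0 < eps ->
  (forall t, 0 < eta t) ->
  (forall i t, 0 < alpha i t) ->
  (forall t, (t < T)%N ->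
     forall u, Psi h phi eta alpha w eps t (vreg t) <= Psi h phi eta alpha w eps t u) ->
  (* Algorithm 2 *)
  (forall t, (t < T)%N -> w t.+1 = w t - eta t *: v t) ->
  (forall t, (t < T)%N -> enorm (v t - vreg t) <= eps) ->
  (* Assumption C *)
  0 < V ->
  (forall t, (t < T)%N -> exists vh : 'rV[R]_d,
       enorm vh ^+ 2 <= V /\ Phi h phi eta alpha w t vh <= eps ^+ 2) ->
  (* step size *)
  0 < D ->
  (forall t, eta t = D * Num.sqrt eps) ->
  forall (i : 'I_n) (t : nat), (t < T)%N ->
    enorm (err_vec h eta w v i t) ^+ 2
      <= c%:R * (2 + (V + eps ^+ 2 + 2) * G * D ^+ 2) ^+ 2 * eps ^+ 2.
Proof.
move=> n0 c0 d0 dphi G0 hC2 hH e0 eta0 al0 hmin hw hv V0 hC D0 heta i t ht.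
have Phi0 : forall u, 0 <= Phi h phi eta alpha w t u.
  move=> u; rewrite /Phi; apply: mulr_ge0.
    by rewrite invr_ge0 mulr_ge0 // ler0n.
  by apply: sumr_ge0 => *; exact: sqr_ge0.
have nvreg : ns (vreg t) <= V + 2.
  have [vh [hvh hPh]] := hC t ht.
  have := hmin t ht vh; rewrite /Psi enorm2 => hh.
  have := Phi0 (vreg t); have := ns_ge0 (vreg t).
  have e2 : 0 < eps ^+ 2 by rewrite exprn_gt0.
  move: hh hvh hPh e2; set E := eps ^+ 2; set a := ns (vreg t); nra.
have nv : ns (v t) <= 2 * (V + 2) + 2 * eps ^+ 2.
  have -> : v t = vreg t + (v t - vreg t) by rewrite addrC subrK.
  apply: (le_trans (ns_addle _ _)).
  have : ns (v t - vreg t) <= eps ^+ 2.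
    rewrite -enorm2; have := hv t ht; have := enorm_ge0 (v t - vreg t); nra.
  lra.
set q := - (eta t *: v t).
have nq : ns q = D ^+ 2 * eps * ns (v t).
  rewrite /q -scaleNr nsZ sqrrN heta exprMn sqr_sqrtr //; exact: ltW.
have herr : forall j, `|err_vec h eta w v i t 0 j| <= G * ns q / 2.
  move=> j; have [dg [dG _]] := hC2 i j.
  have hM : forall z, `|\sum_(l < d) q 0 l * (q *m hessian (comp_fun (h i) j) z) 0 l|
              <= G * ns q by move=> z; exact: quad_bound.
  have := taylor2 (w t) dg dG hM.
  have [_ hj] := comp_diff (w t) (fun j' w' => (hC2 i j').1 w').
  suff -> : err_vec h eta w v i t 0 j = comp_fun (h i) j (q + w t)
     - comp_fun (h i) j (w t) - 'd (comp_fun (h i) j) (w t) q by [].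
  rewrite /err_vec !mxE hw // hj /q linearN linearZ /= /comp_fun opprK.
  by rewrite [w t + _]addrC linearZ.
set B := (2 + (V + eps ^+ 2 + 2) * G * D ^+ 2) * eps.
have hB : G * ns q / 2 <= B.
  rewrite nq /B.
  have P0 : 0 <= G * D ^+ 2 * eps.
    by rewrite !mulr_ge0 ?sqr_ge0 //; apply: ltW.
  have : G * D ^+ 2 * eps * (ns (v t) / 2) <= G * D ^+ 2 * eps * (V + eps ^+ 2 + 2).
    by apply: ler_wpM2l => //; lra.
  have : G * ns q / 2 = G * D ^+ 2 * eps * (ns (v t) / 2) by rewrite nq; field.
  rewrite nq => ->.
  have e2 := ltW e0.
  move=> hh; apply: (le_trans hh).
  have -> : (2 + (V + eps ^+ 2 + 2) * G * D ^+ 2) * eps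
    = 2 * eps + G * D ^+ 2 * eps * (V + eps ^+ 2 + 2) by ring.
  lra.
have hj : forall j, err_vec h eta w v i t 0 j ^+ 2 <= B ^+ 2.
  move=> j; rewrite -real_normK ?num_real //.
  have := herr j; have := normr_ge0 (err_vec h eta w v i t 0 j); have := hB.
  have B0 : 0 <= G * ns q / 2.
    by apply: mulr_ge0; [apply: mulr_ge0; [apply: ltW|apply: ns_ge0]|].
  move: B0; nra.
rewrite enorm2 /ns.
apply: (le_trans (ler_sum _ (fun j _ => hj j))).
rewrite big_const_ord iter_addr addr0 -mulr_natl /B; rewrite le_eqVlt; apply/orP; left; apply/eqP; ring.
Qed.
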